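(* Fix $c_0,c_1\ge 0$. Suppose that $\varepsilon=(\varepsilon_0,\varepsilon_1)=(0,0)$ with probability one. Then the estimator is incentive compatible: for every $(\beta_0,\beta_1)\in\mathbb{R}^2$ and all $x,r\in\{0,1\}$, $$\mathbb{E}_\varepsilon\big[\hat f(x)-f(x)\big]^2\le \mathbb{E}_\varepsilon\big[\hat f(r)-f(x)\big]^2 .$$
   Context: Setting: an agent has a binary characteristic $x\in\{0,1\}$ and ideal action $f(x)=\beta_0+\beta_1x$, with unknown parameters $\beta=(\beta_0,\beta_1)$. A statistician observes $y_x=f(x)+\varepsilon_x$ for $x=0,1$, where $\varepsilon_0,\varepsilon_1$ are i.i.d. with mean zero, and computes $(b_0,b_1)=(b_0(\varepsilon,\beta),b_1(\varepsilon,\beta))$ solving $\min_{b_0,b_1}\sum_{x=0,1}(y_x-b_0-b_1x)^2+c_0\mathbf{1}_{b_1\neq0}+c_1|b_1|$, breaking indifference between including ($b_1\ne 0$) and excluding ($b_1=0$) in favor of inclusion. Given the agent's report $r\in\{0,1\}$ the statistician takes the action $\hat f(r)=b_0+b_1r$; the agent's payoff is $-(\hat f(r)-f(x))^2$. The estimator is called incentive compatible if the displayed inequality holds for every $\beta$ and all $x,r\in\{0,1\}$. *)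

(* Defs.v *)
From HB Require Import structures.
From mathcomp Require Import all_boot all_order all_algebra.
From mathcomp Require Import all_classical all_reals all_analysis.
Set Implicit Arguments. Unset Strict Implicit. Unset Printing Implicit Defensive.
Import Order.TTheory GRing.Theory Num.Theory.
Local Open Scope ring_scope.

Definition lin (R : realType) (a0 a1 : R) (x : bool) : R := a0 + a1 * (x%:R).

Definition pobj (R : realType) (c0 c1 y0 y1 b0 b1 : R) : R :=
  (y0 - lin b0 b1 false) ^+ 2 + (y1 - lin b0 b1 true) ^+ 2
  + c0 * (b1 != 0)%:R + c1 * `|b1|.

(* (b0, b1) is the statistician's estimate: it minimizes the objective, and
   indifference between including (b1 <> 0) and excluding (b1 = 0) is broken
   in favor of inclusion, i.e. an excluding estimate is chosen only if no
   including pair attains the minimum. *)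
Definition is_estimate (R : realType) (c0 c1 y0 y1 b0 b1 : R) : Prop :=
  (forall a0 a1 : R, pobj c0 c1 y0 y1 b0 b1 <= pobj c0 c1 y0 y1 a0 a1) /\
  (b1 = 0 -> forall a0 a1 : R, a1 != 0 ->
     pobj c0 c1 y0 y1 b0 b1 < pobj c0 c1 y0 y1 a0 a1).

(* Main.v *)
Require Import Defs.
From HB Require Import structures.
From mathcomp Require Import all_boot all_order all_algebra.
From mathcomp Require Import all_classical all_reals all_analysis.
Import Order.TTheory GRing.Theory Num.Theory.
Local Open Scope ring_scope.
From mathcomp Require Import measurable_realfun ring lra.
Import HBNNSimple.
Local Open Scope classical_set_scope.
Local Open Scope ereal_scope.

Lemma le_int_nm (R : realType) d (T : measurableType d) (mu : {measure set T -> \bar R})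
  (f g : T -> \bar R) : (forall x, 0 <= f x) -> (forall x, f x <= g x) ->
  \int[mu]_x f x <= \int[mu]_x g x.
Proof.
move=> f0 fg.
have g0 x : 0 <= g x by exact: le_trans (f0 x) (fg x).
rewrite !ge0_integralTE//.
apply: le_ereal_sup => _ [h hf <-]; exists h => // x; exact: le_trans (hf x) (fg x).
Qed.

Lemma ae_cst_int (R : realType) d (T : measurableType d) (P : probability T R)
  (f : T -> R) (c : R) (N : set T) : measurable N -> P N = 0 ->
  (forall x, (0 <= f x)%R) -> (0 <= c)%R -> (forall x, ~ N x -> f x = c) ->
  \int[P]_x (f x)%:E = c%:E.
Proof.
move=> mN PN f0 c0 fc.
have PC : P (~` N) = 1 by rewrite probability_setC// PN sube0.
apply/eqP; rewrite eq_le; apply/andP; split.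
- rewrite ge0_integralTE; last by move=> x; rewrite lee_fin.
  apply: ge_ereal_sup => _ [h /= hf <-].
  have := @integral_nnsfun _ _ _ P setT measurableT h; rewrite patch_setT => <-.
  have mh : measurable_fun setT (EFin \o h) by exact/measurable_EFinP.
  rewrite (@ge0_negligible_integral _ _ _ P setT N)//; last first.
    by move=> x _; rewrite lee_fin.
  rewrite setTD.
  apply: le_trans (_ : \int[P]_(x in ~` N) (cst c%:E) x <= _).
    apply: ge0_le_integral => //.
    + exact: measurableC mN.
    + by move=> x _; rewrite lee_fin.
    + exact/measurable_EFinP/measurable_funTS.
    + by move=> x Nx; rewrite -(fc x Nx); exact: hf.
  rewrite integral_cst; last exact: measurableC mN.
  rewrite (_ : (c%:E * _)%E = c%:E * 1)%E; [by rewrite mule1|f_equal; exact: PC].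
- apply: le_trans (_ : \int[P]_x (((fun=> c%:E) \_ (~` N)) x) <= _).
    rewrite -integral_mkcond integral_cst; last exact: measurableC mN.
    rewrite (_ : (c%:E * _)%E = c%:E * 1)%E; [by rewrite mule1|f_equal; exact: PC].
  apply: le_int_nm.
    by move=> x; rewrite /patch; case: ifP => _ //; rewrite lee_fin.
  move=> x; rewrite /patch; case: ifPn => [/set_mem Nx|_]; last by rewrite lee_fin.
  by rewrite fc.
Qed.
Local Close Scope ereal_scope.
Local Close Scope classical_set_scope.
Local Open Scope ring_scope.
Lemma key (R : realType) (c0 c1 beta0 beta1 b0 b1 : R) :
  (forall a0 a1 : R, pobj c0 c1 (lin beta0 beta1 false + 0) (lin beta0 beta1 true + 0) b0 b1
      <= pobj c0 c1 (lin beta0 beta1 false + 0) (lin beta0 beta1 true + 0) a0 a1) ->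
  forall x r : bool, (lin b0 b1 x - lin beta0 beta1 x) ^+ 2 <= (lin b0 b1 r - lin beta0 beta1 x) ^+ 2.
Proof.
move=> hmin.
have H1 := hmin ((beta0 + (beta0 + beta1) - b1) / 2) b1.
have H2 := hmin ((beta0 + (beta0 + beta1) + b1) / 2) (- b1).
move: H1 H2; rewrite /pobj /lin /= !mulr0 !mulr1 !addr0 oppr_eq0 normrN.
move=> H1 H2.
have E1 : (beta0 - b0) + ((beta0 + beta1) - (b0 + b1)) = 0 by nra.
have E2 : 0 <= b1 * beta1 by nra.
by case=> [] [] /=; rewrite ?mulr0 ?mulr1 ?addr0; nra.
Qed.
Theorem claim1 (R : realType) (d : measure_display) (T : measurableType d)
  (P : probability T R) (c0 c1 : R) (hc0 : 0 <= c0) (hc1 : 0 <= c1)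
  (eps0 eps1 : {RV P >-> R})
  (heps : {ae P, forall w, eps0 w = 0 /\ eps1 w = 0})
  (b : R -> R -> R -> R -> R * R)
  (hb : forall e0 e1 beta0 beta1 : R,
      is_estimate c0 c1 (lin beta0 beta1 false + e0) (lin beta0 beta1 true + e1)
        (b e0 e1 beta0 beta1).1 (b e0 e1 beta0 beta1).2) :
  forall (beta0 beta1 : R) (x r : bool),
    ('E_P[fun w => ((lin (b (eps0 w) (eps1 w) beta0 beta1).1
                        (b (eps0 w) (eps1 w) beta0 beta1).2 x
                    - lin beta0 beta1 x) ^+ 2)%R]
     <= 'E_P[fun w => ((lin (b (eps0 w) (eps1 w) beta0 beta1).1
                          (b (eps0 w) (eps1 w) beta0 beta1).2 r
                      - lin beta0 beta1 x) ^+ 2)%R])%E.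
Proof.
move=> beta0 beta1 x r.
have [N [mN PN sub]] := heps.
have hk := @key R c0 c1 beta0 beta1 _ _ (hb 0 0 beta0 beta1).1 x r.
have ex w : ~ N w -> eps0 w = 0 /\ eps1 w = 0.
  move=> Nw; case: (pselect (eps0 w = 0 /\ eps1 w = 0)) => // H.
  by exfalso; apply: Nw; apply: sub.
rewrite unlock.
pose F (z : bool) := fun w => (lin (b (eps0 w) (eps1 w) beta0 beta1).1
          (b (eps0 w) (eps1 w) beta0 beta1).2 z - lin beta0 beta1 x) ^+ 2.
pose C (z : bool) := (lin (b 0 0 beta0 beta1).1 (b 0 0 beta0 beta1).2 z - lin beta0 beta1 x) ^+ 2.
have E z : (\int[P]_w (F z w)%:E = (C z)%:E)%E.
  apply: (@ae_cst_int R d T P (F z) (C z) N mN PN).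
  - by move=> w; exact: sqr_ge0.
  - exact: sqr_ge0.
  - by move=> w /ex [e0 e1]; rewrite /F /C e0 e1.
have := E x; rewrite /F => ->.
have := E r; rewrite /F => ->.
by rewrite lee_fin.
Qed.
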